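(* Let $k\ge 2$ and let $\mathcal H$ be a 3-uniform hypergraph on vertex set $V$ with no Berge cycle of length $2k+1$. Let $V=V_1\cup V_2$ be a partition. Let $\mathcal H_4$ be a set of hyperedges of $\mathcal H$ such that each $E\in\mathcal H_4$ has the form $E=\{u,v,w\}$ where, for some $i\in\{1,2\}$, $u,v\in V_i$, $w\in V_{3-i}$, the pair $\{u,v\}$ is contained in no hyperedge of $\mathcal H$ other than $E$, and $\max(\deg_{\mathcal H}(w,u),\deg_{\mathcal H}(w,v))\ge 3$. Let $G_4$ be the graph with edge set $\{E\cap V_i : E\in\mathcal H_4\}$ (i.e. the pairs $\{u,v\}$ above). Then $G_4$ contains no cycle of length $2k$; consequently $|\mathcal H_4|\le \mathrm{ex}(n,C_{2k})$ where $n=|V|$.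
   Context: $\deg_{\mathcal H}(u,v)$ is the number of hyperedges of $\mathcal H$ containing both $u$ and $v$. A Berge cycle of length $m$ is a family of $m$ distinct hyperedges $H_0,\dots,H_{m-1}$ for which there exist distinct vertices $v_0,\dots,v_{m-1}$ with $\{v_i,v_{i+1}\}\subset H_i$ (indices mod $m$). $\mathrm{ex}(n,C_{2k})$ is the maximum number of edges of a simple graph on $n$ vertices with no cycle of length $2k$. *)

(* Defs.v *)
From mathcomp Require Import all_boot.
Set Implicit Arguments. Unset Strict Implicit. Unset Printing Implicit Defensive.

Definition uniform (T : finType) (r : nat) (H : {set {set T}}) : bool :=
  [forall E in H, #|E| == r].

Definition codeg (T : finType) (H : {set {set T}}) (u v : T) : nat :=
  #|[set E in H | (u \in E) && (v \in E)]|.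

Definition berge_cycle (T : finType) (H : {set {set T}}) (m : nat) : Prop :=
  exists (v : 'I_m -> T) (F : 'I_m -> {set T}),
    [/\ injective v, injective F &
        forall i : 'I_m, [/\ F i \in H, v i \in F i & v (ordS i) \in F i]].

Definition simple_graph (T : finType) (G : {set {set T}}) : bool :=
  [forall e in G, #|e| == 2].

Definition has_cycle (T : finType) (G : {set {set T}}) (m : nat) : bool :=
  [exists v : {ffun 'I_m -> T},
     injectiveb v && [forall i : 'I_m, [set v i; v (ordS i)] \in G]].

Definition ex (n m : nat) : nat :=
  \max_(G : {set {set 'I_n}} | simple_graph G && ~~ has_cycle G m) #|G|.

(* Main.v *)
Require Import Defs.
From mathcomp Require Import all_boot.
From mathcomp Require Import zify.
Set Implicit Arguments. Unset Strict Implicit. Unset Printing Implicit Defensive.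

Definition ordm m (hm : 0 < m) (j : nat) : 'I_m := Ordinal (ltn_pmod j hm).

Lemma val_ordm m (hm : 0 < m) j : j < m -> val (ordm hm j) = j.
Proof. by move=> h; rewrite /= modn_small. Qed.

Lemma val_ordS n (i : 'I_n) : val (ordS i) = if i.+1 == n then 0 else i.+1.
Proof.
rewrite /=; case: eqP => [->|h]; first exact: modnn.
apply: modn_small; have := ltn_ord i; lia.
Qed.

Lemma berge_fwd (T : finType) (H : {set {set T}}) m (hm : 1 < m)
  (v : 'I_m -> T) (E : 'I_m -> {set T}) (w : T) (F : {set T}) (i0 : 'I_m) :
  val i0 = 0 -> injective v -> injective E ->
  (forall i, [/\ E i \in H, v i \in E i & v (ordS i) \in E i]) ->
  (forall i, w != v i) -> w \in E i0 -> F \in H -> (forall i, F != E i) ->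
  w \in F -> v i0 \in F -> berge_cycle H m.+1.
Proof.
move=> h0 vinj Einj hE wv wE0 FH FE wF vF.
have hm0 : 0 < m by lia.
pose o := ordm hm0.
have ko : forall i : 'I_m.+1, val i != 0 -> val (o i) = if val i == m then 0 else val i.
  move=> i hi; rewrite /= ; case: eqP => [->|h]; first exact: modnn.
  apply: modn_small; have := ltn_ord i; lia.
exists (fun i : 'I_m.+1 => if val i == 0 then w else v (o i)).
exists (fun i : 'I_m.+1 => if val i == m then F else E (o i)).
split.
- move=> i j /=.
  case: eqP => hi; case: eqP => hj.
  + by move=> _; apply: ord_inj; rewrite hi hj.
  + by move=> e; move: (wv (o j)); rewrite e eqxx.
  + by move=> e; move: (wv (o i)); rewrite -e eqxx.
  move=> /vinj /(congr1 val); rewrite !ko; try (apply/eqP; done).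
  move=> e; apply: val_inj; move: e hi hj; have := ltn_ord i; have := ltn_ord j; rewrite /=; case: eqP; case: eqP; lia.
- move=> i j /=.
  case: eqP => hi; case: eqP => hj.
  + by move=> _; apply: ord_inj; rewrite hi hj.
  + by move=> e; move: (FE (o j)); rewrite e eqxx.
  + by move=> e; move: (FE (o i)); rewrite -e eqxx.
  move=> /Einj /(congr1 val) /= e; apply: val_inj.
  have li : val i < m by move: hi; have := ltn_ord i; rewrite /=; lia.
  have lj : val j < m by move: hj; have := ltn_ord j; rewrite /=; lia.
  by move: e; rewrite /= !modn_small.
- move=> [i hi]; rewrite !val_ordS /=.
  case: i hi => [|i] hi.
  + have -> : (0 == m) = false by apply/eqP; lia.
    have -> : (1 == m.+1) = false by apply/eqP; lia.
    have -> : o 0 = i0 by apply: val_inj; rewrite val_ordm.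
    have -> : o 1 = ordS i0.
      apply: val_inj; rewrite val_ordS val_ordm // h0.
      by case: eqP => //; lia.
    by have [? ? ?] := hE i0.
  case: (eqVneq i.+1 m) => him.
  + rewrite him eqxx /=.
    have -> : o m = i0 by apply: val_inj; rewrite /= modnn h0.
    by have -> : (m == 0) = false by apply/eqP; lia.
  have -> : (i.+2 == m.+1) = false by apply/eqP; lia.
  rewrite /=.
  have -> : o i.+2 = ordS (o i.+1).
    apply: val_inj; rewrite val_ordS /= (modn_small (m := i.+1)); last lia.
    case: eqP => [->|h]; first exact: modnn.
    apply: modn_small; lia.
  by have [? ? ?] := hE (o i.+1).
Qed.
Lemma berge_bwd (T : finType) (H : {set {set T}}) m (hm : 1 < m)
  (v : 'I_m -> T) (E : 'I_m -> {set T}) (w : T) (F : {set T}) (i0 i1 : 'I_m) :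
  val i0 = 0 -> val i1 = 1 -> injective v -> injective E ->
  (forall i, [/\ E i \in H, v i \in E i & v (ordS i) \in E i]) ->
  (forall i, w != v i) -> w \in E i0 -> F \in H -> (forall i, F != E i) ->
  w \in F -> v i1 \in F -> berge_cycle H m.+1.
Proof.
move=> h0 h1 vinj Einj hE wv wE0 FH FE wF vF.
have hm0 : 0 < m by lia.
pose o := ordm hm0.
pose r (i : 'I_m) := o (if val i <= 1 then 1 - val i else m.+1 - val i).
pose r' (i : 'I_m) := o (if val i == 0 then 0 else m - val i).
have vr : forall i : 'I_m, val (r i) = if val i <= 1 then 1 - val i else m.+1 - val i.
  move=> [i hi]; rewrite val_ordm //=; case: ifP; lia.
have vr' : forall i : 'I_m, val (r' i) = if val i == 0 then 0 else m - val i.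
  move=> [i hi]; rewrite val_ordm //=; case: ifP; lia.
have rinj : injective r.
  move=> i j /(congr1 val); rewrite !vr => e; apply: val_inj; move: e.
  have := ltn_ord i; have := ltn_ord j; rewrite /=.
  by case: ifP; case: ifP; lia.
have r'inj : injective r'.
  move=> i j /(congr1 val); rewrite !vr' => e; apply: val_inj; move: e.
  have := ltn_ord i; have := ltn_ord j; rewrite /=.
  by case: eqP; case: eqP; lia.
have k1 : forall i, r (ordS i) = r' i.
  move=> i; apply: val_inj; rewrite vr vr' val_ordS.
  have := ltn_ord i; rewrite /=.
  by case: eqP; case: ifP; case: eqP; rewrite /=; lia.
have k2 : forall i, r i = ordS (r' i).
  move=> i; apply: val_inj; rewrite vr val_ordS vr'.
  have := ltn_ord i; rewrite /=.
  by case: eqP; case: ifP; case: eqP; rewrite /=; try case: ifP; lia.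
apply: (berge_fwd (v := v \o r) (E := E \o r') (w := w) (F := F) (i0 := i0) hm h0).
- exact: inj_comp vinj rinj.
- exact: inj_comp Einj r'inj.
- by move=> i /=; rewrite k1 k2; have [? ? ?] := hE (r' i).
- by move=> i /=.
- by rewrite /=; have -> : r' i0 = i0 by apply: val_inj; rewrite vr' h0.
- done.
- by move=> i /=.
- done.
- by rewrite /=; have -> : r i0 = i1 by apply: val_inj; rewrite vr h0 h1.
Qed.
Lemma pair_eq (T : finType) (a b u v : T) : a != b -> [set a; b] = [set u; v] ->
  (u = a /\ v = b) \/ (u = b /\ v = a).
Proof.
move=> ab e.
have hu : u \in [set a; b] by rewrite e !inE eqxx.
have hv : v \in [set a; b] by rewrite e !inE eqxx orbT.
have ha : a \in [set u; v] by rewrite -e !inE eqxx.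
have hb : b \in [set u; v] by rewrite -e !inE eqxx orbT.
move: hu hv ha hb; rewrite !inE.
case/orP=> /eqP -> ; case/orP=> /eqP ->; rewrite ?eqxx ?(eq_sym b a) ?(negbTE ab) //=.
all: try by [left | right].
Qed.

Lemma core (T : finType) (E P Q : {set T}) u v w a b :
  u \in P -> v \in P -> w \in Q -> w \notin P -> u \notin Q -> v \notin Q ->
  E = [set u; v; w] -> a != b ->
  ([set a; b] = E :&: P \/ [set a; b] = E :&: Q) -> [set a; b] = [set u; v].
Proof.
move=> uP vP wQ wP uQ vQ -> ab [] e.
  rewrite e; apply/setP=> x; rewrite !inE.
  case: (eqVneq x w) => [->|xw]; last by rewrite orbF; case: eqP => [->|]; rewrite ?uP //= ?andbT; case: eqP => [->|].
  by rewrite (negbTE wP) andbF; case: eqP => [e'|]; [move: uQ; rewrite -e' wQ | case: eqP => // e'; move: vQ; rewrite -e' wQ].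
have EQ : [set u; v; w] :&: Q = [set w].
  apply/setP=> x; rewrite !inE.
  case: (eqVneq x w) => [->|xw]; first by rewrite orbT wQ.
  rewrite orbF andb_orl; apply/negbTE; rewrite negb_or.
  by apply/andP; split; apply/negP => /andP [/eqP -> ?]; [move: uQ | move: vQ]; rewrite ?negbK; apply/negP; rewrite negbK.
exfalso; move: ab; rewrite EQ in e.
have : a \in [set w] by rewrite -e !inE eqxx.
have : b \in [set w] by rewrite -e !inE eqxx orbT.
by rewrite !inE => /eqP -> /eqP ->; rewrite eqxx.
Qed.

Lemma edge_struct (T : finType) (H : {set {set T}}) (V1 V2 : {set T}) (H4 : {set {set T}}) :
  V1 :&: V2 = set0 -> V1 :|: V2 = setT ->
  (forall E, E \in H4 ->
     exists u v w : T,
       [/\ E = [set u; v; w],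
           (u \in V1) && (v \in V1) && (w \in V2)
             || (u \in V2) && (v \in V2) && (w \in V1),
           (forall F, F \in H -> u \in F -> v \in F -> F = E) &
           3 <= maxn (codeg H w u) (codeg H w v)]) ->
  forall E a b, E \in H4 -> a != b ->
    ([set a; b] == E :&: V1) || ([set a; b] == E :&: V2) ->
    exists w, [/\ E = [set a; b; w], (a \in V1) = (b \in V1), (w \in V1) = ~~ (a \in V1),
      (forall F, F \in H -> a \in F -> b \in F -> F = E) &
      3 <= maxn (codeg H w a) (codeg H w b)].
Proof.
move=> dis cov h4 E a b EH4 ab eab.
have inV2 : forall x, (x \in V2) = (x \notin V1).
  move=> x; apply/idP/idP.
  - move=> x2; apply/negP => x1.
    have : x \in V1 :&: V2 by rewrite inE x1 x2.
    by rewrite dis inE.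
  - move=> x1; have : x \in V1 :|: V2 by rewrite cov inE.
       by rewrite inE (negbTE x1).
have [u [v [w [Edef side uniq cod]]]] := h4 E EH4.
have eab' : [set a; b] = E :&: V1 \/ [set a; b] = E :&: V2.
  by case/orP: eab => /eqP; [left|right].
have [e sab wa] : [/\ [set a; b] = [set u; v], (a \in V1) = (b \in V1) & (w \in V1) = ~~ (a \in V1)].
  case/orP: side => /andP [/andP [uP vP] wQ].
  - have e : [set a; b] = [set u; v].
      apply: (core uP vP wQ _ _ _ Edef ab eab').
      + by rewrite -inV2 wQ.
      + by rewrite inV2 uP.
      + by rewrite inV2 vP.
    have aP : a \in V1.
      have : a \in [set u; v] by rewrite -e !inE eqxx.
      by rewrite !inE => /orP [] /eqP ->.
    have bP : b \in V1.
      have : b \in [set u; v] by rewrite -e !inE eqxx orbT.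
      by rewrite !inE => /orP [] /eqP ->.
    by split => //; rewrite ?aP ?bP //; move: wQ; rewrite inV2 => /negbTE ->.
  - have e : [set a; b] = [set u; v].
      apply: (core uP vP wQ _ _ _ Edef ab (proj1 (or_comm _ _) eab')).
      + by rewrite inV2 negbK.
      + by rewrite -inV2.
      + by rewrite -inV2.
    move: uP vP; rewrite !inV2 => uP vP.
    have aP : a \in V1 = false.
      have : a \in [set u; v] by rewrite -e !inE eqxx.
      by rewrite !inE => /orP [] /eqP ->; apply/negbTE.
    have bP : b \in V1 = false.
      have : b \in [set u; v] by rewrite -e !inE eqxx orbT.
      by rewrite !inE => /orP [] /eqP ->; apply/negbTE.
    by split => //; rewrite ?aP ?bP ?wQ.
exists w; split => //.
- by rewrite Edef; apply/setP=> x; move: (e) => /setP /(_ x); rewrite !inE => ->.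
- move=> F FH aF bF; apply: uniq => //.
  + have : u \in [set a; b] by rewrite e !inE eqxx.
    by rewrite !inE => /orP [] /eqP ->.
  + have : v \in [set a; b] by rewrite e !inE eqxx orbT.
    by rewrite !inE => /orP [] /eqP ->.
- by case: (pair_eq ab e) => [[eu ev]|[eu ev]]; move: cod; rewrite eu ev // maxnC.
Qed.

Lemma no_cycle (T : finType) (k : nat) (H : {set {set T}})
    (V1 V2 : {set T}) (H4 : {set {set T}}) :
  2 <= k ->
  ~ berge_cycle H (2 * k + 1) ->
  V1 :&: V2 = set0 -> V1 :|: V2 = setT ->
  H4 \subset H ->
  (forall E, E \in H4 ->
     exists u v w : T,
       [/\ E = [set u; v; w],
           (u \in V1) && (v \in V1) && (w \in V2)
             || (u \in V2) && (v \in V2) && (w \in V1),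
           (forall F, F \in H -> u \in F -> v \in F -> F = E) &
           3 <= maxn (codeg H w u) (codeg H w v)]) ->
  ~~ has_cycle [set e | [exists E in H4,
               ((e == E :&: V1) || (e == E :&: V2)) && (#|e| == 2)]] (2 * k).
Proof.
move=> k2 nB dis cov sub h4.
have hes := edge_struct dis cov h4.
rewrite addn1 in nB.
move: nB; set m := 2 * k => nB.
have hm : 2 < m by rewrite /m; lia.
have hm1 : 1 < m by lia.
have hm0 : 0 < m by lia.
apply/negP => /existsP [vf /andP [/injectiveP vinj /forallP hv]].
set v := (fun i => vf i) in vinj hv.
have neqS : forall i : 'I_m, v i != v (ordS i).
  move=> i; apply/negP => /eqP /vinj /(congr1 val); rewrite val_ordS.
  by have := ltn_ord i; rewrite /=; case: eqP; lia.
have : forall i : 'I_m, exists E, E \in H4 /\ (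
   ([set v i; v (ordS i)] == E :&: V1) || ([set v i; v (ordS i)] == E :&: V2)).
  move=> i; move: (hv i); rewrite inE => /existsP [E /andP [EH /andP [h _]]].
  by exists E.
case/fin_all_exists => E hE.
have : forall i : 'I_m, exists w, [/\ E i = [set v i; v (ordS i); w],
   (v i \in V1) = (v (ordS i) \in V1), (w \in V1) = ~~ (v i \in V1),
   (forall F, F \in H -> v i \in F -> v (ordS i) \in F -> F = E i) &
   3 <= maxn (codeg H w (v i)) (codeg H w (v (ordS i)))].
  by move=> i; have [h1 h2] := hE i; apply: hes => //; apply: neqS.
case/fin_all_exists => W hW.
pose i0 := ordm hm0 0.
have vi0 : val i0 = 0 by rewrite val_ordm.
pose s x := x \in V1.
have same : forall i, s (v i) = s (v i0).
  suff H0 : forall n (h : n < m), s (v (Ordinal h)) = s (v i0).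
    by case=> n h; apply: H0.
  elim=> [|n IH] h.
    by have -> : Ordinal h = i0 by apply: val_inj; rewrite vi0.
  have h' : n < m by lia.
  have -> : Ordinal h = ordS (Ordinal h').
    by apply: val_inj; rewrite val_ordS /=; case: eqP => //; lia.
  have [_ e _ _ _] := hW (Ordinal h').
  by rewrite /s -e; apply: IH.
have EH : forall i, E i \in H by move=> i; have [h _] := hE i; apply: (subsetP sub).
have memE : forall i x, x \in E i -> s x = s (v i0) -> x = v i \/ x = v (ordS i).
  move=> i x; have [-> _ sw _ _] := hW i; rewrite !inE.
  case/orP => [/orP [] /eqP ->|/eqP ->]; [by left|by right|].
  move=> h; exfalso; move: h; rewrite /s sw -/(s (v i)) same /s; by case: (v i0 \in V1).
have vE : forall i, v i \in E i /\ v (ordS i) \in E i.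
  by move=> i; have [-> _ _ _ _] := hW i; rewrite !inE !eqxx ?orbT.
have Einj : injective E.
  move=> i j eij.
  have [a1|a2] := memE j (v i) (ltac:(rewrite -eij; exact: (vE i).1)) (same i).
  - exact: vinj.
  have [b1|b2] := memE j (v (ordS i)) (ltac:(rewrite -eij; exact: (vE i).2)) (same _).
  - move: a2 b1 => /vinj a2 /vinj b1; exfalso.
    move: (congr1 val a2) (congr1 val b1); rewrite !val_ordS.
    have := ltn_ord i; have := ltn_ord j.
    by rewrite /=; case: eqP; case: eqP; lia.
  - by move: b2 => /vinj /ordS_inj.
pose w := W i0.
have wv : forall i, w != v i.
  move=> i; apply/negP => /eqP e.
  have [_ _ sw _ _] := hW i0.
  have := same i; rewrite /s -e -/w sw.
  by case: (v i0 \in V1).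
have wE0 : w \in E i0 by have [-> _ _ _ _] := hW i0; rewrite !inE eqxx ?orbT.
have [_ _ _ _ cod] := hW i0.
rewrite -/w leq_max in cod.
have pickF : forall x (A B : {set T}), 3 <= codeg H w x ->
    exists F, [/\ F \in H, w \in F, x \in F, F != A & F != B].
  move=> x A B; rewrite /codeg => c.
  set S := [set F in H | (w \in F) && (x \in F)] in c.
  have : S :\ A :\ B != set0.
    apply/negP => /eqP e0; move: c; rewrite (cardsD1 A S) (cardsD1 B (S :\ A)) e0 cards0.
    by case: (A \in S); case: (B \in S :\ A).
  case/set0Pn => F; rewrite !inE => /and5P [FB FA FH wF xF].
  by exists F; split.
case/orP: cod => cod.
- have [F [FH wF vF FA FB]] := pickF _ (E i0) (E (ord_pred i0)) cod.
  apply: nB; apply: (berge_fwd hm1 vi0 vinj Einj _ wv wE0 FH _ wF vF).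
  + by move=> i; have [? ?] := vE i; split.
  + move=> j; apply/negP => /eqP FEj.
    have [e|e] := memE j (v i0) (ltac:(rewrite -FEj; exact: vF)) erefl.
    * by move: FA; rewrite FEj (vinj _ _ e) eqxx.
    * by move: FB; rewrite FEj (vinj _ _ e) ordSK eqxx.
- pose i1 := ordS i0.
  have vi1 : val i1 = 1 by rewrite val_ordS vi0; case: eqP => //; lia.
  have [F [FH wF vF FA FB]] := pickF _ (E i0) (E i1) cod.
  apply: nB; apply: (berge_bwd hm1 vi0 vi1 vinj Einj _ wv wE0 FH _ wF vF).
  + by move=> i; have [? ?] := vE i; split.
  + move=> j; apply/negP => /eqP FEj.
    have [e|e] := memE j (v i1) (ltac:(rewrite -FEj; exact: vF)) (same _).
    * by move: FB; rewrite FEj -(vinj _ _ e) eqxx.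
    * by move: FA; rewrite FEj (ordS_inj (vinj _ _ e)) eqxx.
Qed.
Lemma transport (T : finType) (G : {set {set T}}) m :
  simple_graph G -> ~~ has_cycle G m -> #|G| <= ex #|T| m.
Proof.
move=> sG nc.
pose f : T -> 'I_#|T| := @enum_rank T.
have finj : injective f := @enum_rank_inj T.
pose G' : {set {set 'I_#|T|}} := [set [set f x | x in (e : {set T})] | e in G].
have cG : #|G'| = #|G| by rewrite card_imset //; apply: imset_inj.
rewrite -cG /ex; apply: (leq_bigmax_cond (P := fun G0 => simple_graph G0 && ~~ has_cycle G0 m) (F := fun G0 => #|G0|)).
apply/andP; split.
- apply/forallP => e'; apply/implyP => /imsetP [e eG ->].
  rewrite card_imset //; exact: (implyP (forallP sG e) eG).
- apply/negP => /existsP [v' /andP [/injectiveP v'inj /forallP hv']].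
  move/negP: nc; apply; apply/existsP.
  exists [ffun i => enum_val (v' i)]; apply/andP; split.
  + apply/injectiveP => i j; rewrite !ffunE => /enum_val_inj; exact: v'inj.
  + apply/forallP => i; rewrite !ffunE.
    have /imsetP [e eG he] := hv' i.
    suff -> : [set enum_val (v' i); enum_val (v' (ordS i))] = e by [].
    apply: (imset_inj finj); rewrite -he.
    by rewrite imsetU1 imset_set1 /f !enum_valK.
Qed.
Lemma split_sets (T : finType) (P Q : {set T}) u v w :
  u \in P -> v \in P -> w \in Q -> w \notin P -> u \notin Q -> v \notin Q ->
  [set u; v; w] :&: P = [set u; v] /\ [set u; v; w] :&: Q = [set w].
Proof.
move=> uP vP wQ wP uQ vQ; split.
  apply/setP=> x; rewrite !inE.
  case: (eqVneq x w) => [->|xw]; last by rewrite orbF; case: eqP => [->|]; rewrite ?uP //= ?andbT; case: eqP => [->|].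
  by rewrite (negbTE wP) andbF; case: eqP => [e'|]; [move: uQ; rewrite -e' wQ | case: eqP => // e'; move: vQ; rewrite -e' wQ].
apply/setP=> x; rewrite !inE.
case: (eqVneq x w) => [->|xw]; first by rewrite orbT wQ.
rewrite orbF andb_orl; apply/negbTE; rewrite negb_or.
by apply/andP; split; apply/negP => /andP [/eqP -> ?]; [move: uQ | move: vQ]; rewrite ?negbK; apply/negP; rewrite negbK.
Qed.

Lemma card_H4 (T : finType) (H : {set {set T}})
    (V1 V2 : {set T}) (H4 : {set {set T}}) :
  uniform 3 H ->
  V1 :&: V2 = set0 -> V1 :|: V2 = setT ->
  H4 \subset H ->
  (forall E, E \in H4 ->
     exists u v w : T,
       [/\ E = [set u; v; w],
           (u \in V1) && (v \in V1) && (w \in V2)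
             || (u \in V2) && (v \in V2) && (w \in V1),
           (forall F, F \in H -> u \in F -> v \in F -> F = E) &
           3 <= maxn (codeg H w u) (codeg H w v)]) ->
  #|H4| <= #|[set e | [exists E in H4,
               ((e == E :&: V1) || (e == E :&: V2)) && (#|e| == 2)]]|.
Proof.
move=> un dis cov sub h4.
have inV2 : forall x, (x \in V2) = (x \notin V1).
  move=> x; apply/idP/idP.
  - move=> x2; apply/negP => x1.
    have : x \in V1 :&: V2 by rewrite inE x1 x2.
    by rewrite dis inE.
  - move=> x1; have : x \in V1 :|: V2 by rewrite cov inE.
    by rewrite inE (negbTE x1).
pose phi (E : {set T}) := if #|E :&: V1| == 2 then E :&: V1 else E :&: V2.
have key : forall E, E \in H4 -> exists u v, [/\ phi E = [set u; v], u != v,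
    (phi E == E :&: V1) || (phi E == E :&: V2) &
    (forall F, F \in H -> u \in F -> v \in F -> F = E)].
  move=> E EH4; have [u [v [w [Edef side uniq _]]]] := h4 E EH4.
  have uv : u != v.
    apply/negP => /eqP e; move: (forallP un E); rewrite (subsetP sub _ EH4) /= Edef e.
    have -> : [set v; v; w] = [set v; w].
      by apply/setP => x; rewrite !inE orbb.
    by rewrite cards2; case: (v != w).
  exists u, v; split => //.
  - rewrite /phi Edef; case/orP: side => /andP [/andP [uP vP] wQ].
    + have [e1 e2] := split_sets uP vP wQ (ltac:(by rewrite -inV2)) (ltac:(by rewrite inV2 uP)) (ltac:(by rewrite inV2 vP)).
      by rewrite e1 cards2 uv.
    + have [e1 e2] := split_sets uP vP wQ (ltac:(by rewrite inV2 negbK)) (ltac:(by rewrite -inV2)) (ltac:(by rewrite -inV2)).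
      by rewrite e2 cards1 e1.
  - by rewrite /phi; case: ifP => _; rewrite eqxx ?orbT.
have phiG : forall E, E \in H4 -> phi E \in [set e | [exists E in H4,
               ((e == E :&: V1) || (e == E :&: V2)) && (#|e| == 2)]].
  move=> E EH4; have [u [v [e uv h _]]] := key E EH4.
  rewrite inE; apply/existsP; exists E; rewrite EH4 h /= e cards2 uv.
  done.
have inj : {in H4 &, injective phi}.
  move=> E E' EH E'H pe.
  have [u [v [e uv _ uniq]]] := key E EH.
  have [u' [v' [e' _ h' _]]] := key E' E'H.
  have sub' : phi E' \subset E'.
    by case/orP: h' => /eqP ->; apply: subsetIl.
  apply/esym; apply: uniq; first exact: (subsetP sub).
  - by apply: (subsetP sub'); rewrite -pe e !inE eqxx.
  - by apply: (subsetP sub'); rewrite -pe e !inE eqxx orbT.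
rewrite -(card_in_imset inj); apply: subset_leq_card.
by apply/subsetP => x /imsetP [E EH ->]; apply: phiG.
Qed.

Theorem mainTheorem8 (T : finType) (k : nat) (H : {set {set T}})
    (V1 V2 : {set T}) (H4 : {set {set T}}) :
  2 <= k ->
  uniform 3 H ->
  ~ berge_cycle H (2 * k + 1) ->
  V1 :&: V2 = set0 -> V1 :|: V2 = setT ->
  H4 \subset H ->
  (forall E, E \in H4 ->
     exists u v w : T,
       [/\ E = [set u; v; w],
           (u \in V1) && (v \in V1) && (w \in V2)
             || (u \in V2) && (v \in V2) && (w \in V1),
           (forall F, F \in H -> u \in F -> v \in F -> F = E) &
           3 <= maxn (codeg H w u) (codeg H w v)]) ->
  let G4 : {set {set T}} :=
    [set e | [exists E in H4,
               ((e == E :&: V1) || (e == E :&: V2)) && (#|e| == 2)]] in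
  ~~ has_cycle G4 (2 * k) /\ #|H4| <= ex #|T| (2 * k).
Proof.
move=> k2 un nB dis cov sub h4 G4.
have nc : ~~ has_cycle G4 (2 * k) by apply: (no_cycle k2 nB dis cov sub h4).
split => //.
apply: leq_trans (card_H4 un dis cov sub h4) _.
apply: transport nc.
by apply/forallP => e; apply/implyP; rewrite inE => /existsP [E /andP [_ /andP [_ ->]]].
Qed.
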